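(* Let $Q$ be a connected non-Abelian complex algebraic group with Lie algebra $\mathfrak q$, and let $\mathfrak l\subset\mathfrak q$ be a Lie subalgebra. If $A\subset\mathcal S(\mathfrak q)^{\mathfrak l}$ is a Poisson-commutative subalgebra, then $$\mathrm{tr.deg}\,A\le\tfrac12(\dim\mathfrak q-\mathrm{ind}\,\mathfrak q-\dim\mathfrak l+\mathrm{ind}\,\mathfrak l)+\mathrm{ind}\,\mathfrak q=\mathbf b(\mathfrak q)-\mathbf b(\mathfrak l)+\mathrm{ind}\,\mathfrak l.$$
   Context: $\mathcal S(\mathfrak q)\cong\mathbb C[\mathfrak q^*]$ with the Lie–Poisson bracket. $\mathcal S(\mathfrak q)^{\mathfrak l}=\{F\in\mathcal S(\mathfrak q):\{\xi,F\}=0\ \forall \xi\in\mathfrak l\}$. For a Lie algebra $\mathfrak a$, $\mathrm{ind}\,\mathfrak a=\min_{\gamma\in\mathfrak a^*}\dim\mathfrak a_\gamma$, where $\mathfrak a_\gamma$ is the coadjoint stabiliser of $\gamma$, and $\mathbf b(\mathfrak a)=(\dim\mathfrak a+\mathrm{ind}\,\mathfrak a)/2$. *)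

(* Defs.v *)
From mathcomp Require Import all_boot all_algebra.
From mathcomp Require Import Rstruct.
From mathcomp Require realfun.
From mathcomp Require Import complex mpoly.
Set Implicit Arguments. Unset Strict Implicit. Unset Printing Implicit Defensive.
Import GRing.Theory.
Local Open Scope ring_scope.

Definition CC : fieldType := (Rdefinitions.R)[i].

(* A Lie algebra q of dimension n over C: underlying space C^n = 'rV[CC]_n with
   standard basis e_i = delta_mx 0 i, and bracket given by structure constants
   c i j = [e_i, e_j], extended bilinearly. *)
Definition lie_br (n : nat) (c : 'I_n -> 'I_n -> 'rV[CC]_n)
  (x y : 'rV[CC]_n) : 'rV[CC]_n :=
  \sum_(i < n) \sum_(j < n) (x 0 i * y 0 j) *: c i j.

Definition is_lie_algebra (n : nat) (c : 'I_n -> 'I_n -> 'rV[CC]_n) : Prop :=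
  (forall x, lie_br c x x = 0) /\
  (forall x y z, lie_br c x (lie_br c y z) + lie_br c y (lie_br c z x)
                 + lie_br c z (lie_br c x y) = 0).

Definition non_abelian (n : nat) (c : 'I_n -> 'I_n -> 'rV[CC]_n) : Prop :=
  exists x y, lie_br c x y != 0.

(* A Lie subalgebra l of q, given as the row space of a square matrix L. *)
Definition lie_subalgebra (n : nat) (c : 'I_n -> 'I_n -> 'rV[CC]_n)
  (L : 'M[CC]_n) : Prop :=
  forall x y, (x <= L)%MS -> (y <= L)%MS -> (lie_br c x y <= L)%MS.

(* A linear form gamma on q is a column vector: gamma(x) = (x *m gamma) 0 0.
   Restrictions of such forms to l give all of l^*. *)
Definition gram (n : nat) (c : 'I_n -> 'I_n -> 'rV[CC]_n) (gamma : 'cV[CC]_n)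
  : 'M[CC]_n :=
  \matrix_(i, j) (lie_br c (delta_mx 0 i) (delta_mx 0 j) *m gamma) 0 0.

(* Coadjoint stabiliser of gamma|_l in l:
   l_gamma = { x in l | gamma([x, y]) = 0 for all y in l }
           = l ∩ { x | x *m gram *m L^T = 0 }. *)
Definition coad_stab (n : nat) (c : 'I_n -> 'I_n -> 'rV[CC]_n)
  (L : 'M[CC]_n) (gamma : 'cV[CC]_n) : 'M[CC]_n :=
  (L :&: kermx (gram c gamma *m L^T))%MS.

Definition is_index (n : nat) (c : 'I_n -> 'I_n -> 'rV[CC]_n)
  (L : 'M[CC]_n) (k : nat) : Prop :=
  (exists gamma, \rank (coad_stab c L gamma) = k) /\
  (forall gamma, (k <= \rank (coad_stab c L gamma))%N).

Definition bnum (d i : nat) : rat := (d%:R + i%:R) / 2.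

(* S(q) = C[q^*] = {mpoly CC[n]}; the element x of q is the linear polynomial
   sum_i x_i X_i. *)
Definition lin (n : nat) (x : 'rV[CC]_n) : {mpoly CC[n]} :=
  \sum_(i < n) x 0 i *: 'X_i.

Definition pbr (n : nat) (c : 'I_n -> 'I_n -> 'rV[CC]_n)
  (F G : {mpoly CC[n]}) : {mpoly CC[n]} :=
  \sum_(i < n) \sum_(j < n) lin (c i j) * (mderiv i F) * (mderiv j G).

Definition l_invariant (n : nat) (c : 'I_n -> 'I_n -> 'rV[CC]_n)
  (L : 'M[CC]_n) (F : {mpoly CC[n]}) : Prop :=
  forall xi, (xi <= L)%MS -> pbr c (lin xi) F = 0.

Definition is_subalgebra (n : nat) (A : {pred {mpoly CC[n]}}) : Prop :=
  [/\ 1 \in A,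
      forall F G, F \in A -> G \in A -> F + G \in A,
      forall F G, F \in A -> G \in A -> F * G \in A &
      forall (a : CC) F, F \in A -> a *: F \in A].

Definition alg_indep (n k : nat) (f : 'I_k -> {mpoly CC[n]}) : Prop :=
  forall P : {mpoly CC[k]}, comp_mpoly [tuple f i | i < k] P = 0 -> P = 0.

(* Main.v *)
Require Import Defs.
From mathcomp Require Import all_boot all_algebra.
From mathcomp Require Import Rstruct.
From mathcomp Require Import complex mpoly.
From mathcomp Require Import zify ring lra.
From Stdlib Require Import Classical.
Set Implicit Arguments. Unset Strict Implicit. Unset Printing Implicit Defensive.
Import GRing.Theory Num.Theory.
Local Open Scope ring_scope.


Lemma natr_neq0 (m : nat) : (m.+1)%:R != 0 :> CC.
Proof. exact: (negbT (@pnatr_eq0 (Rdefinitions.R[i]) m.+1)). Qed.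

Lemma natr_inj_CC : injective (fun m : nat => m%:R : CC).
Proof.
move=> a b /= h; apply/eqP.
have := @eqr_nat (Rdefinitions.R[i]) a b. move=> <-. by apply/eqP.
Qed.

Lemma digits_inj n D (f g : 'I_n -> nat) : (forall i, f i < D)%N -> (forall i, g i < D)%N ->
  (\sum_i f i * D ^ i = \sum_i g i * D ^ i)%N -> forall i, f i = g i.
Proof.
elim: n f g => [|n IH] f g hf hg; first by move=> _ [].
rewrite !big_ord_recl /= !expn0 !muln1.
have e : forall h : 'I_n.+1 -> nat, (\sum_(i < n) h (lift ord0 i) * D ^ lift ord0 i
   = D * \sum_(i < n) h (lift ord0 i) * D ^ i)%N.
  move=> h; rewrite big_distrr /=; apply: eq_bigr => i _.
  by rewrite /bump /= expnS mulnCA.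
rewrite !e => hs.
have Dp : (0 < D)%N by have := hf ord0; lia.
have h0 : f ord0 = g ord0.
  have := congr1 (modn^~ D) hs.
  by rewrite !(addnC (_ ord0)) !(mulnC D) !modnMDl !modn_small.
have h1 : (\sum_(i < n) f (lift ord0 i) * D ^ i = \sum_(i < n) g (lift ord0 i) * D ^ i)%N.
  have := congr1 (divn^~ D) hs.
  by rewrite !(addnC (_ ord0)) !(mulnC D) !divnMDl // !divn_small // !addn0.
have := IH _ _ (fun i => hf (lift ord0 i)) (fun i => hg (lift ord0 i)) h1.
move=> H i; case: (unliftP ord0 i) => [j ->|->] //.
Qed.

Lemma poly_nonroot (Q : {poly CC}) : Q != 0 -> exists t, ~~ root Q t.
Proof.
move=> Q0.
pose rs := [seq (i%:R : CC) | i <- iota 0 (size Q)].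
case: (boolP (all (root Q) rs)) => [allr|/allPn [x _ hx]]; last by exists x.
have := max_poly_roots Q0 allr.
rewrite size_map size_iota ltnn map_inj_uniq ?iota_uniq //.
  by move=> h; have := h isT.
exact: natr_inj_CC.
Qed.

Lemma mnm_le_mdeg n (m : 'X_{1..n}) i : (m i <= mdeg m)%N.
Proof. by rewrite mdegE (bigD1 i) //= leq_addr. Qed.

Lemma mpoly_nonroot n (P : {mpoly CC[n]}) : P != 0 -> exists v : 'I_n -> CC, P.@[v] != 0.
Proof.
move=> P0.
set D := msize P.
pose e (m : 'X_{1..n}) := (\sum_(i < n) m i * D ^ i)%N.
pose Q : {poly CC} := \sum_(m <- msupp P) P@_m *: 'X^(e m).
have HQ t : Q.[t] = P.@[fun i => t ^+ (D ^ i)].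
  rewrite mevalE /Q horner_sum; apply: eq_bigr => m _.
  rewrite hornerZ hornerXn; congr (_ * _).
  rewrite /e (big_morph (fun k => t ^+ k) (exprD t) (expr0 t)).
  by apply: eq_bigr => i _; rewrite mulnC exprM.
have bnd m : m \in msupp P -> forall i, (m i < D)%N.
  move=> /msize_mdeg_lt h i; exact: leq_ltn_trans (mnm_le_mdeg m i) h.
have Q0 : Q != 0.
  have m0P := mlead_supp P0; set m0 := mlead P in m0P.
  apply/eqP => /(congr1 (fun q : {poly CC} => q`_(e m0))).
  rewrite coef0 /Q coef_sum (bigD1_seq m0) ?msupp_uniq //= coefZ coefXn eqxx mulr1.
  rewrite big1 ?addr0 => [|m mm0].
    by move=> h; move: m0P; rewrite mcoeff_msupp h eqxx.
  rewrite coefZ coefXn; case: eqP => [h|]; last by rewrite mulr0.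
  case: (boolP (m \in msupp P)) => [mP|mP]; last by rewrite memN_msupp_eq0 ?mul0r.
  exfalso; move/negP: mm0; apply; apply/eqP/mnmP => i.
  exact: (@digits_inj n D (fun i => m i) (fun i => m0 i) (bnd _ mP) (bnd _ m0P) (esym h) i).
have [t ht] := poly_nonroot Q0.
by exists (fun i => t ^+ (D ^ i)); rewrite -HQ.
Qed.


Lemma sylv (F : fieldType) m n p (A : 'M[F]_(m,n)) (B : 'M_(n,p)) :
  (\rank A + \rank B <= \rank (A *m B) + n)%N.
Proof.
have h1 := mxrank_mul_ker A B.
have h2 : (\rank (A :&: kermx B) <= \rank (kermx B))%N by apply: mxrankS; apply: capmxSr.
rewrite mxrank_ker in h2. have h3 := rank_leq_row B. lia.
Qed.

Lemma la_bound (F : fieldType) n k (B : 'M[F]_n) (V : 'M_(k,n)) (L : 'M_n) iq il :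
  B^T = - B -> \rank V = k -> V *m B *m V^T = 0 -> L *m B *m V^T = 0 ->
  (n <= \rank B + iq)%N -> (\rank L <= \rank (L *m B *m L^T) + il)%N ->
  (k.*2 + \rank L <= n + iq + il)%N.
Proof.
move=> skew rV VBV LBV hB hL.
have VBL : V *m B *m L^T = 0.
  have := congr1 trmx LBV; rewrite !trmx_mul trmxK skew trmx0.
  by rewrite mulNmx mulmxN => /eqP; rewrite oppr_eq0 mulmxA => /eqP.
set U := col_mx V L.
have UBU : U *m B *m U^T = block_mx 0 0 0 (L *m B *m L^T).
  by rewrite /U tr_col_mx mul_col_mx mul_col_row !VBV VBL LBV.
have rUBU : \rank (U *m B *m U^T) = \rank (L *m B *m L^T).
  by rewrite UBU rank_diag_block_mx mxrank0.
have s1 := sylv (U *m B) U^T. have s2 := sylv U B.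
rewrite mxrank_tr rUBU in s1.
have rU : \rank U = \rank (V + L)%MS by rewrite addsmxE.
have hsc := mxrank_sum_cap V L.
set W := (V :&: L)%MS.
have hW : (\rank W + \rank (L *m (B *m L^T)) <= \rank L)%N.
  have := mxrank_mul_ker L (B *m L^T).
  suff : (W <= L :&: kermx (B *m L^T))%MS by move=> /mxrankS; lia.
  rewrite sub_capmx capmxSr /=.
  have /submxP [X ->] : (W <= V)%MS by apply: capmxSl.
  by apply/sub_kermxP; rewrite -mulmxA (mulmxA V) VBL mulmx0.
rewrite mulmxA in hW. fold W in hsc. lia.
Qed.


Lemma mderivXU n (i j : 'I_n) : mderiv i ('X_j : {mpoly CC[n]}) = ((j == i)%:R)%:MP.
Proof.
rewrite mderivX mnm1E; case: eqP => [->|_].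
  have -> : (U_(i) - U_(i))%MM = 0%MM by apply/mnmP => l; rewrite mnmBE mnm0E subnn.
  by rewrite mpolyX0 scale1r mpolyC1.
by rewrite scale0r mpolyC0.
Qed.

Definition CR n k (lq : n.-tuple {mpoly CC[k]}) (P : {mpoly CC[n]}) :=
  forall i : 'I_k, mderiv i (P \mPo lq) =
     \sum_(j < n) (mderiv j P \mPo lq) * mderiv i (tnth lq j).

Lemma alg_sum (R : comRingType) n (A B C : 'I_n -> R) (a b : R) :
  (\sum_j A j * C j) * b + a * (\sum_j B j * C j) = \sum_j (A j * b + a * B j) * C j.
Proof.
rewrite big_distrl big_distrr -big_split; apply: eq_bigr => j _ /=; ring.
Qed.

Section Chain.
Variables (n k : nat) (lq : n.-tuple {mpoly CC[k]}).

Lemma CR_C c : CR lq c%:MP.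
Proof.
move=> i; rewrite comp_mpolyC mderivC big1 // => j _.
by rewrite mderivC comp_mpoly0 mul0r.
Qed.

Lemma CR_X j : CR lq 'X_j.
Proof.
move=> i; rewrite comp_mpolyXU -tnth_nth (bigD1 j) //= big1 ?addr0.
  by rewrite mderivXU eqxx comp_mpolyC mpolyC1 mul1r.
by move=> j' /negbTE hj; rewrite mderivXU eq_sym hj comp_mpolyC mpolyC0 mul0r.
Qed.

Lemma CR_D P Q : CR lq P -> CR lq Q -> CR lq (P + Q).
Proof.
move=> hP hQ i; rewrite comp_mpolyD mderivD [in X in X + _ = _]hP [in X in _ + X = _]hQ -big_split /=.
by apply: eq_bigr => j _; rewrite (mderivD j P Q) (comp_mpolyD lq) mulrDl.
Qed.

Lemma CR_Z c P : CR lq P -> CR lq (c *: P).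
Proof.
move=> hP i; rewrite comp_mpolyZ mderivZ [in X in _ *: X = _]hP scaler_sumr.
by apply: eq_bigr => j _; rewrite (mderivZ j c P) (comp_mpolyZ c) scalerAl.
Qed.

Lemma CR_M P Q : CR lq P -> CR lq Q -> CR lq (P * Q).
Proof.
move=> hP hQ i.
have hm : forall A B : {mpoly CC[n]}, (A * B) \mPo lq = (A \mPo lq) * (B \mPo lq).
  by move=> A B; apply: (rmorphM (comp_mpoly lq)).
rewrite (hm P Q) mderivM [in X in X * _ + _ = _]hP [in X in _ + _ * X = _]hQ.
rewrite (alg_sum (fun j => P^`M(j) \mPo lq) (fun j => Q^`M(j) \mPo lq)
   (fun j => (tnth lq j)^`M(i)) (P \mPo lq) (Q \mPo lq)).
apply: eq_bigr => j _; congr (_ * _).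
by rewrite (mderivM j P Q) (comp_mpolyD lq) !hm.
Qed.

Lemma CR_0 : CR lq 0.
Proof. by have := CR_C 0; rewrite mpolyC0. Qed.

Lemma CR_1 : CR lq 1.
Proof. by have := CR_C 1; rewrite mpolyC1. Qed.

Lemma CR_sum (I : Type) (r : seq I) (F : I -> {mpoly CC[n]}) :
  (forall x, CR lq (F x)) -> CR lq (\sum_(x <- r) F x).
Proof.
move=> h; elim: r => [|x r IH]; first by rewrite big_nil; apply: CR_0.
rewrite big_cons; exact: (CR_D (h x) IH).
Qed.

Lemma CR_prod (I : Type) (r : seq I) (F : I -> {mpoly CC[n]}) :
  (forall x, CR lq (F x)) -> CR lq (\prod_(x <- r) F x).
Proof.
move=> h; elim: r => [|x r IH]; first by rewrite big_nil; apply: CR_1.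
rewrite big_cons; exact: (CR_M (h x) IH).
Qed.

Lemma CR_exp P e : CR lq P -> CR lq (P ^+ e).
Proof.
move=> h; elim: e => [|e IH]; first by rewrite expr0; apply: CR_1.
rewrite exprS; exact: (CR_M h IH).
Qed.

Lemma chain_rule P : CR lq P.
Proof.
rewrite [P]mpolyE; apply: CR_sum => m; apply: CR_Z.
rewrite mpolyXE_id; apply: CR_prod => i; apply: CR_exp; exact: CR_X.
Qed.

End Chain.


Lemma mderiv0_mon n (P : {mpoly CC[n]}) j :
  mderiv j P = 0 -> forall m, m \in msupp P -> m j = 0%N.
Proof.
move=> h m mP; apply/eqP/negPn/negP => mj.
have hle : (U_(j) <= m)%MM by rewrite lep1mP.
have := congr1 (mcoeff (m - U_(j))%MM) h.
rewrite mcoeff_deriv (submK hle) mcoeff0 -mulr_natr => /eqP.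
rewrite mulf_eq0 (negbTE (natr_neq0 _)) orbF => /eqP e.
by move: mP; rewrite mcoeff_msupp e eqxx.
Qed.

Lemma comp_indep n k (P : {mpoly CC[n]}) j (h h' : n.-tuple {mpoly CC[k]}) :
  mderiv j P = 0 -> (forall i, i != j -> tnth h i = tnth h' i) -> P \mPo h = P \mPo h'.
Proof.
move=> dP hh; rewrite (comp_mpolyE P h) (comp_mpolyE P h').
apply: eq_big_seq => m mP; congr (_ *: _); apply: eq_bigr => i _.
case: (eqVneq i j) => [->|ne]; last by rewrite (hh i ne).
by rewrite (mderiv0_mon dP mP) !expr0.
Qed.

Lemma comp_comp n k l (P : {mpoly CC[n]}) (t : n.-tuple {mpoly CC[k]})
  (g : k.-tuple {mpoly CC[l]}) :
  (P \mPo t) \mPo g = P \mPo [tuple (tnth t i) \mPo g | i < n].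
Proof.
rewrite (comp_mpolyE P t) (comp_mpolyE P [tuple (tnth t i) \mPo g | i < n]).
rewrite (raddf_sum (comp_mpoly g)); apply: eq_bigr => m _.
Time simpl. rewrite (comp_mpolyZ _ _ g); congr (_ *: _).
rewrite (rmorph_prod (comp_mpoly g)); apply: eq_bigr => i _.
by rewrite (rmorphXn (comp_mpoly g)) tnth_mktuple.
Qed.


Lemma msizeM_le' n (p q : {mpoly CC[n]}) : (msize (p * q) <= msize p + msize q)%N.
Proof.
have [->|p0] := eqVneq p 0; first by rewrite mul0r msize0.
have [->|q0] := eqVneq q 0; first by rewrite mulr0 msize0.
by rewrite msizeM // leq_pred.
Qed.

Lemma msize_exp_le n (q : {mpoly CC[n]}) e : (msize (q ^+ e) <= (e * msize q).+1)%N.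
Proof.
elim: e => [|e IH]; first by rewrite expr0 msize1.
rewrite exprS; apply: leq_trans (msizeM_le' _ _) _; rewrite mulSn; lia.
Qed.

Lemma msize_prod_le n (I : Type) (r : seq I) (F : I -> {mpoly CC[n]}) :
  (msize (\prod_(x <- r) F x) <= (\sum_(x <- r) msize (F x)).+1)%N.
Proof.
elim: r => [|x r IH]; first by rewrite !big_nil msize1.
rewrite !big_cons; apply: leq_trans (msizeM_le' _ _) _; lia.
Qed.

Lemma leq_expn_l a b e : (a <= b)%N -> (a ^ e <= b ^ e)%N.
Proof. by move=> h; elim: e => // e IH; rewrite !expnS leq_mul. Qed.

Lemma count_dep n p (g : 'I_p -> {mpoly CC[n]}) : (n < p)%N -> ~ alg_indep g.
Proof.
move=> np indep.
pose G := [tuple g a | a < p].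
pose d := (\max_(a < p) msize (g a))%N.
have hd a : (msize (g a) <= d)%N by apply: (leq_bigmax a).
pose c := (p * d.+2)%N. pose E := (c ^ n).+1. pose N := (p * (E * d).+1).+1.
pose I := {ffun 'I_p -> 'I_E}. pose J := {ffun 'I_n -> 'I_N}.
pose monI (phi : I) : 'X_{1..p} := [multinom (phi a : nat) | a < p].
pose monJ (psi : J) : 'X_{1..n} := [multinom (psi i : nat) | i < n].
pose Y (phi : I) := 'X_[monI phi] \mPo G.
have Ysize phi : (msize (Y phi) <= N)%N.
  rewrite /Y comp_mpolyX; apply: (leq_trans (msize_prod_le _ _)).
  rewrite ltnS; apply: (@leq_trans (\sum_(a < p) (E * d).+1)); first apply: leq_sum.
    move=> a _; apply: leq_trans (msize_exp_le _ _) _; rewrite ltnS tnth_mktuple mnmE.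
    exact: leq_mul (ltnW (ltn_ord _)) (hd a).
  by rewrite sum_nat_const card_ord.
have cardIJ : (#|J| < #|I|)%N.
  rewrite !card_ffun !card_ord.
  have NcE : (N <= c * E)%N.
    rewrite /N /c; have : (0 < E)%N by []. nia.
  apply: leq_ltn_trans (leq_expn_l n NcE) _.
  rewrite expnMn; apply: (@leq_trans (E ^ n.+1)); last by apply: leq_pexp2l.
  by rewrite expnS ltn_pmul2r ?expn_gt0 //.
pose M := \matrix_(r < #|I|, s < #|J|) (Y (enum_val r))@_(monJ (enum_val s)).
have rk : (\rank M < #|I|)%N := leq_ltn_trans (rank_leq_col M) cardIJ.
have K0 : kermx M != 0 by rewrite -mxrank_eq0 mxrank_ker; lia.
have [r0 hr0] : exists r0, row r0 (kermx M) != 0.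
  case: (pickP (fun r => row r (kermx M) != 0)) => [r0 h|h]; first by exists r0.
  exfalso; move/negP: K0; apply; apply/eqP/row_matrixP => r.
  by rewrite row0; apply/eqP; move/negbFE: (h r).
pose w := row r0 (kermx M).
have wM : w *m M = 0 by rewrite -row_mul mulmx_ker row0.
have [j0 hj0] : exists j0, w 0 j0 != 0.
  case: (pickP (fun j => w 0 j != 0)) => [j0 h|h]; first by exists j0.
  exfalso; move/negP: hr0; apply; apply/eqP/rowP => j.
  by rewrite [RHS]mxE; apply/eqP; move/negbFE: (h j).
have monI_inj : injective monI.
  move=> phi phi' /mnmP e; apply/ffunP => a; apply/val_inj; move: (e a); rewrite !mnmE.
  by [].
pose P : {mpoly CC[p]} := \sum_(r < #|I|) w 0 r *: 'X_[monI (enum_val r)].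
have P0 : P != 0.
  apply/negP => /eqP /(congr1 (mcoeff (monI (enum_val j0)))).
  rewrite mcoeff0 /P (raddf_sum (mcoeff _)) (bigD1 j0) //= big1 ?addr0.
    by rewrite mcoeffZ mcoeffX eqxx mulr1 => h; rewrite h eqxx in hj0.
  move=> r rj; rewrite mcoeffZ mcoeffX.
  have -> : (monI (enum_val r) == monI (enum_val j0)) = false.
    by apply/negbTE; rewrite (inj_eq monI_inj) (inj_eq enum_val_inj).
  by rewrite mulr0.
apply: (negP P0); apply/eqP; apply: indep.
apply/mpolyP => u; rewrite mcoeff0.
rewrite /P (raddf_sum (comp_mpoly _)) (raddf_sum (mcoeff u)).
transitivity (\sum_(r < #|I|) w 0 r * (Y (enum_val r))@_u).
  by apply: eq_bigr => r _ /=; rewrite comp_mpolyZ mcoeffZ.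
case: (boolP [forall i, (u i < N)%N]) => [hu|hu].
  pose psi : J := [ffun i => Ordinal (elimT forallP hu i)].
  have eu : monJ psi = u by apply/mnmP => i; rewrite mnmE ffunE.
  have h := congr1 (fun A : 'M[CC]_(1, #|J|) => A 0 (enum_rank psi)) wM; rewrite !mxE in h.
  apply: etrans _ h; by apply: eq_bigr => r _; rewrite [w 0 r]mxE [M r _]mxE enum_rankK eu.
apply: big1 => r _.
move: hu; rewrite negb_forall => /existsP [i hi].
rewrite memN_msupp_eq0 ?mulr0 //; apply: msize_mdeg_ge.
apply: leq_trans (Ysize _) _; apply: leq_trans (mnm_le_mdeg u i); lia.
Qed.


Definition jac n p (g : 'I_p -> {mpoly CC[n]}) (v : 'I_n -> CC) : 'M[CC]_(p, n) :=
  \matrix_(a, i) (mderiv i (g a)).@[v].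

Definition extf n p (g : 'I_p -> {mpoly CC[n]}) (i : 'I_n) (a : 'I_(p + 1)) : {mpoly CC[n]} :=
  match split a with inl b => g b | inr _ => 'X_i end.

Definition lastp p : 'I_(p + 1) := rshift p ord0.

Lemma extf_l n p (g : 'I_p -> {mpoly CC[n]}) i b : extf g i (lshift 1 b) = g b.
Proof. by rewrite /extf (unsplitK (inl b)). Qed.

Lemma extf_r n p (g : 'I_p -> {mpoly CC[n]}) i : extf g i (lastp p) = 'X_i.
Proof. by rewrite /extf /lastp (unsplitK (inr ord0)). Qed.

Lemma ord_caseP p (a : 'I_(p + 1)) : (exists b, a = lshift 1 b) \/ a = lastp p.
Proof.
rewrite -(splitK a); case: (split a) => [b|c]; first by left; exists b.
by right; rewrite /= /lastp (ord1 c).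
Qed.

Lemma lshift_neq_last p b : lshift 1 b != lastp p.
Proof. by rewrite /lastp eq_shift. Qed.

Lemma msize_deriv_lt n (P : {mpoly CC[n]}) j : P != 0 -> (msize (mderiv j P) < msize P)%N.
Proof.
move=> P0.
have hP : (0 < msize P)%N by rewrite lt0n msize_poly_eq0.
rewrite msizeE; apply: (@leq_trans (msize P).-1.+1); last by rewrite prednK.
rewrite ltnS; apply/bigmax_leqP_seq => m mP _.
have : P@_(m + U_(j)) != 0.
  by move: mP; rewrite mcoeff_msupp mcoeff_deriv; apply: contraNneq => ->; rewrite mul0rn.
rewrite -mcoeff_msupp => /msize_mdeg_lt; rewrite mdegD mdeg1 addn1 => h.
by rewrite -ltnS prednK.
Qed.

Lemma deriv_last_nz n p (g : 'I_p -> {mpoly CC[n]}) i (P : {mpoly CC[p + 1]}) :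
  alg_indep g -> P != 0 -> P \mPo [tuple extf g i a | a < p + 1] = 0 ->
  mderiv (lastp p) P != 0.
Proof.
move=> ind P0 h; apply/eqP => dP.
pose t : (p + 1).-tuple {mpoly CC[p]} :=
  [tuple (match split a with inl b => 'X_b | inr _ => 0 end) | a < p + 1].
pose s : p.-tuple {mpoly CC[p + 1]} := [tuple 'X_(lshift 1 b) | b < p].
pose P' := P \mPo t.
have e1 : P' \mPo [tuple g b | b < p] = 0.
  rewrite /P' comp_comp -h; apply: (comp_indep dP) => a alast.
  rewrite !tnth_mktuple; case: (ord_caseP a) => [[b ae]|ae]; last by rewrite ae eqxx in alast.
  by rewrite ae /extf (unsplitK (inl b)) /= comp_mpolyXU -tnth_nth tnth_mktuple.
have P'0 := ind _ e1.
apply: (negP P0); apply/eqP.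
rewrite -(comp_mpoly_id P).
rewrite (comp_indep dP (h' := [tuple (tnth t a \mPo s) | a < p + 1])).
  by rewrite -comp_comp -/P' P'0 comp_mpoly0.
move=> a alast; rewrite !tnth_mktuple.
case: (ord_caseP a) => [[b ae]|ae]; last by rewrite ae eqxx in alast.
by rewrite ae (unsplitK (inl b)) /= comp_mpolyXU -tnth_nth tnth_mktuple.
Qed.

Lemma good_witness n p (g : 'I_p -> {mpoly CC[n]}) i (P : {mpoly CC[p + 1]}) :
  alg_indep g -> P != 0 -> P \mPo [tuple extf g i a | a < p + 1] = 0 ->
  exists P', [/\ P' != 0, P' \mPo [tuple extf g i a | a < p + 1] = 0 &
     mderiv (lastp p) P' \mPo [tuple extf g i a | a < p + 1] != 0].
Proof.
move=> ind; move: {2}(msize P) (leqnn (msize P)) => k.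
elim: k P => [|k IH] P hk P0 h.
  by move: P0 hk; rewrite -msize_poly_eq0 leqn0 => /negbTE ->.
case: (classic (mderiv (lastp p) P \mPo [tuple extf g i a | a < p + 1] = 0)) => [hd|/eqP hd];
  last exact: (ex_intro _ P (And3 P0 h hd)).
apply: (IH (mderiv (lastp p) P)) => //; last exact: (deriv_last_nz ind P0 h).
by rewrite -ltnS; apply: leq_trans (msize_deriv_lt _ P0) hk.
Qed.

Lemma key_row n p (g : 'I_p -> {mpoly CC[n]}) i :
  alg_indep g -> ~ alg_indep (extf g i) ->
  exists Q : {mpoly CC[n]}, Q != 0 /\ forall v, Q.@[v] != 0 -> ((delta_mx 0 i : 'rV[CC]_n) <= jac g v)%MS.
Proof.
move=> ind hn.
have [P hP] := not_all_ex_not _ _ hn.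
have [h hP0] := imply_to_and _ _ hP.
have P0 : P != 0 by apply/eqP.
have [P' [P'0 h' hd]] := good_witness ind P0 h.
set E := [tuple extf g i a | a < p + 1] in h' hd.
exists (mderiv (lastp p) P' \mPo E); split => // v hv.
pose c a := (mderiv a P' \mPo E).@[v].
pose cv : 'rV[CC]_p := \row_b c (lshift 1 b).
have key l : \sum_b c (lshift 1 b) * (mderiv l (g b)).@[v] + c (lastp p) * (i == l)%:R = 0.
  have := chain_rule E P' l.
  rewrite h' mderiv0 => /(congr1 (meval v)); rewrite meval0 (rmorph_sum (meval v)).
  rewrite big_split_ord /= big_ord1 => /esym e; apply: (etrans _ e).
  congr (_ + _).
    by apply: eq_bigr => b _; rewrite mevalM tnth_mktuple extf_l.
  by rewrite mevalM tnth_mktuple -/(lastp p) extf_r mderivXU mevalC.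
have -> : delta_mx 0 i = (- (c (lastp p))^-1) *: (cv *m jac g v).
  apply/rowP => l; rewrite !mxE.
  have -> : \sum_j cv 0 j * jac g v j l = - (c (lastp p) * (i == l)%:R).
    have -> : \sum_j cv 0 j * jac g v j l = \sum_b c (lshift 1 b) * (mderiv l (g b)).@[v].
      by apply: eq_bigr => b _; rewrite !mxE.
    by apply/eqP; rewrite -addr_eq0 (key l).
  rewrite mulrN mulNr opprK mulrA mulVf ?mul1r //.
  by rewrite eqxx /= eq_sym.
by rewrite scalemx_sub // submxMl.
Qed.

Lemma case2 n p (g : 'I_p -> {mpoly CC[n]}) :
  alg_indep g -> (forall i, ~ alg_indep (extf g i)) ->
  exists Q : {mpoly CC[n]}, Q != 0 /\ forall v, Q.@[v] != 0 -> row_free (jac g v).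
Proof.
move=> ind hall.
have hp : (p <= n)%N by rewrite leqNgt; apply/negP => h; exact: count_dep h ind.
have hs (s : seq 'I_n) : exists Q : {mpoly CC[n]}, Q != 0 /\ forall v, Q.@[v] != 0 ->
    forall i, i \in s -> ((delta_mx 0 i : 'rV[CC]_n) <= jac g v)%MS.
  elim: s => [|i s [Q [Q0 hQ]]]; first by exists 1; split => //; rewrite oner_eq0.
  have [Qi [Qi0 hQi]] := key_row ind (hall i).
  exists (Qi * Q); split; first by rewrite mulf_neq0.
  move=> v; rewrite mevalM mulf_eq0 negb_or => /andP [h1 h2] j; rewrite inE => /orP [/eqP ->|js].
    exact: hQi.
  exact: hQ.
have [Q [Q0 hQ]] := hs (enum 'I_n).
exists Q; split => // v hv.
have h1 : (1%:M <= jac g v)%MS.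
  by apply/row_subP => i; rewrite row1; apply: (hQ v hv i); rewrite mem_enum.
have := mxrankS h1; rewrite mxrank1 => h2.
have h3 := rank_leq_row (jac g v).
by rewrite /row_free eqn_leq h3; apply: leq_trans h2.
Qed.

Lemma jac_ext n p (g : 'I_p -> {mpoly CC[n]}) i v :
  jac (extf g i) v = col_mx (jac g v) (jac (fun _ : 'I_1 => 'X_i) v).
Proof.
apply/matrixP => a l; rewrite -(splitK a).
case: (split a) => [b|c] /=.
  by rewrite col_mxEu /jac !mxE extf_l.
by rewrite col_mxEd /jac !mxE (ord1 c) -/(lastp p) extf_r.
Qed.

Lemma jac_main n d : forall p (g : 'I_p -> {mpoly CC[n]}), (n - p)%N = d -> alg_indep g ->
  exists Q : {mpoly CC[n]}, Q != 0 /\ forall v, Q.@[v] != 0 -> row_free (jac g v).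
Proof.
elim: d => [|d IH] p g hd ind.
  apply: (case2 ind) => i hi; apply: (count_dep _ hi); lia.
case: (classic (exists i, alg_indep (extf g i))) => [[i hi]|hn]; last first.
  by apply: (case2 ind) => i hi; apply: hn; exists i.
have [|Q [Q0 hQ]] := IH (p + 1) (extf g i) _ hi; first lia.
exists Q; split => // v hv.
have := hQ v hv; rewrite /row_free jac_ext.
have <- : \rank (jac g v + jac (fun _ : 'I_1 => 'X_i) v)%MS =
  \rank (col_mx (jac g v) (jac (fun _ : 'I_1 => 'X_i) v)) by rewrite addsmxE.
have h1 := mxrank_sum_cap (jac g v) (jac (fun _ : 'I_1 => 'X_i) v).
have h2 := rank_leq_row (jac (fun _ : 'I_1 => 'X_i) v).
have h3 := rank_leq_row (jac g v).
move=> /eqP h4; apply/eqP; lia.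
Qed.

Lemma jacobian n p (g : 'I_p -> {mpoly CC[n]}) : alg_indep g ->
  exists Q : {mpoly CC[n]}, Q != 0 /\ forall v, Q.@[v] != 0 -> row_free (jac g v).
Proof. exact: (@jac_main n (n - p) p g erefl). Qed.


Lemma sum_delta n (V : lmodType CC) (F : 'I_n -> V) i :
  \sum_a ((delta_mx 0 i : 'rV[CC]_n) 0 a) *: F a = F i.
Proof.
rewrite (bigD1 i) //= mxE !eqxx /= scale1r big1 ?addr0 // => a /negbTE ai.
by rewrite mxE ai andbF scale0r.
Qed.

Lemma lie_br_delta n (c : 'I_n -> 'I_n -> 'rV[CC]_n) i j :
  lie_br c (delta_mx 0 i) (delta_mx 0 j) = c i j.
Proof.
rewrite /lie_br.
transitivity (\sum_a (delta_mx 0 i : 'rV[CC]_n) 0 a *: \sum_b (delta_mx 0 j : 'rV[CC]_n) 0 b *: c a b).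
  by apply: eq_bigr => a _; rewrite scaler_sumr; apply: eq_bigr => b _; rewrite scalerA.
by rewrite (sum_delta (fun a => \sum_b (delta_mx 0 j : 'rV[CC]_n) 0 b *: c a b)) sum_delta.
Qed.

Lemma lie_brDl n (c : 'I_n -> 'I_n -> 'rV[CC]_n) x y z :
  lie_br c (x + y) z = lie_br c x z + lie_br c y z.
Proof.
rewrite /lie_br -big_split; apply: eq_bigr => a _; rewrite -big_split.
by apply: eq_bigr => b _; rewrite mxE mulrDl scalerDl.
Qed.

Lemma lie_brDr n (c : 'I_n -> 'I_n -> 'rV[CC]_n) x y z :
  lie_br c x (y + z) = lie_br c x y + lie_br c x z.
Proof.
rewrite /lie_br -big_split; apply: eq_bigr => a _; rewrite -big_split.
by apply: eq_bigr => b _; rewrite mxE mulrDr scalerDl.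
Qed.

Lemma c_skew n (c : 'I_n -> 'I_n -> 'rV[CC]_n) : is_lie_algebra c ->
  forall i j, c j i = - c i j.
Proof.
move=> [alt _] i j.
have := alt (delta_mx 0 i + delta_mx 0 j).
rewrite !lie_brDl !lie_brDr !lie_br_delta.
have -> : c i i = 0 by rewrite -lie_br_delta alt.
have -> : c j j = 0 by rewrite -lie_br_delta alt.
rewrite add0r addr0 => /eqP; rewrite addr_eq0 => /eqP ->.
by rewrite opprK.
Qed.

Lemma meval_lin n (x : 'rV[CC]_n) v : (lin x).@[v] = \sum_l x 0 l * v l.
Proof.
rewrite /lin (raddf_sum (meval v)); apply: eq_bigr => l _.
by rewrite /= mevalZ mevalXU.
Qed.

Lemma linN n (x : 'rV[CC]_n) : lin (- x) = - lin x.
Proof. by rewrite /lin -sumrN; apply: eq_bigr => l _; rewrite mxE scaleNr. Qed.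

Definition Gp n (c : 'I_n -> 'I_n -> 'rV[CC]_n) : 'M[{mpoly CC[n]}]_n :=
  \matrix_(i, j) lin (c i j).

Definition Bm n (c : 'I_n -> 'I_n -> 'rV[CC]_n) v : 'M[CC]_n := map_mx (meval v) (Gp c).

Lemma gramE n (c : 'I_n -> 'I_n -> 'rV[CC]_n) (g : 'cV[CC]_n) :
  gram c g = Bm c (fun l => g l 0).
Proof.
apply/matrixP => i j; rewrite /gram /Bm /Gp !mxE lie_br_delta meval_lin.
by apply: eq_bigr => l _.
Qed.

Lemma Bm_skew n (c : 'I_n -> 'I_n -> 'rV[CC]_n) v : is_lie_algebra c ->
  (Bm c v)^T = - Bm c v.
Proof.
move=> hl; apply/matrixP => i j; rewrite /Bm /Gp !mxE (c_skew hl) linN.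
by rewrite (raddfN (meval v)).
Qed.

Definition grad n (F : {mpoly CC[n]}) v : 'rV[CC]_n := \row_i (mderiv i F).@[v].

Lemma grad_lin n (x : 'rV[CC]_n) v : grad (lin x) v = x.
Proof.
apply/rowP => j; rewrite /grad mxE /lin (raddf_sum (mderiv j)).
rewrite (raddf_sum (meval v)) (bigD1 j) //= big1 ?addr0.
  by rewrite mderivZ mderivXU eqxx mevalZ mevalC mulr1.
by move=> l /negbTE lj; rewrite mderivZ mderivXU lj mevalZ mevalC mulr0.
Qed.

Lemma pbr_eval n (c : 'I_n -> 'I_n -> 'rV[CC]_n) F G v :
  (pbr c F G).@[v] = (grad F v *m Bm c v *m (grad G v)^T) 0 0.
Proof.
rewrite /pbr (raddf_sum (meval v)) !mxE.
under [RHS]eq_bigr do rewrite !mxE big_distrl.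
rewrite exchange_big /=; apply: eq_bigr => i _.
rewrite (raddf_sum (meval v)); apply: eq_bigr => j _.
rewrite /= !mevalM /Bm /Gp /grad !mxE; ring.
Qed.

Lemma map_meval_C n m1 m2 (S : 'M[CC]_(m1, m2)) v :
  map_mx (meval v) (map_mx (@mpolyC n _) S) = S.
Proof. by apply/matrixP => i j; rewrite !mxE mevalC. Qed.

Lemma generic_rank n m1 m2 (G : 'M[{mpoly CC[n]}]_(m1, m2)) (v0 : 'I_n -> CC) :
  exists D : {mpoly CC[n]}, D != 0 /\ forall v, D.@[v] != 0 ->
    (\rank (map_mx (meval v0) G) <= \rank (map_mx (meval v) G))%N.
Proof.
set A := map_mx (meval v0) G; set r := \rank A.
pose S : 'M[CC]_(r, m1) := pid_mx r *m invmx (col_ebase A).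
pose T : 'M[CC]_(m2, r) := invmx (row_ebase A) *m pid_mx r.
have SAT : S *m A *m T = 1%:M.
  rewrite -[A in S *m A](mulmx_ebase A) /S /T.
  rewrite !mulmxA -(mulmxA (pid_mx r) (invmx _)) mulVmx ?col_ebase_unit // mulmx1.
  rewrite -(mulmxA _ (row_ebase A)) mulmxV ?row_ebase_unit // mulmx1.
  rewrite pid_mx_id ?rank_leq_row // pid_mx_id ?rank_leq_col //.
  exact: pid_mx_1.
pose Mp := map_mx (@mpolyC n _) S *m G *m map_mx (@mpolyC n _) T.
have ev v : (\det Mp).@[v] = \det (S *m map_mx (meval v) G *m T).
  by rewrite -det_map_mx !map_mxM !map_meval_C.
exists (\det Mp); split.
  apply/negP => /eqP h; have := ev v0; rewrite h meval0 -/A SAT det1 => /eqP.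
  by rewrite eq_sym oner_eq0.
move=> v hv.
have u : S *m map_mx (meval v) G *m T \in unitmx by rewrite unitmxE unitfE -ev.
have := mxrank_unit u => e.
apply: (@leq_trans (\rank (S *m map_mx (meval v) G *m T))); first by rewrite e.
apply: leq_trans (mxrankM_maxl _ _) _; exact: mxrankM_maxr.
Qed.

Lemma coad_id n (c : 'I_n -> 'I_n -> 'rV[CC]_n) L g :
  (\rank (coad_stab c L g) + \rank (L *m (gram c g *m L^T)) = \rank L)%N.
Proof. by rewrite addnC; exact: mxrank_mul_ker. Qed.

Lemma entry_rows m1 m2 n (A : 'M[CC]_(m1, n)) (M : 'M_n) (C : 'M_(m2, n)) a b :
  (A *m M *m C^T) a b = (row a A *m M *m (row b C)^T) 0 0.
Proof.
rewrite -[in RHS](row_mul a A M) !mxE; apply: eq_bigr => l _.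
by rewrite !mxE.
Qed.

Lemma row_jac n p (f : 'I_p -> {mpoly CC[n]}) v a : row a (jac f v) = grad (f a) v.
Proof. by apply/rowP => l; rewrite !mxE. Qed.

Unset Implicit Arguments. Set Strict Implicit.

Theorem proposition1p1 (n : nat) (c : 'I_n -> 'I_n -> 'rV[CC]_n)
  (L : 'M[CC]_n) (iq il : nat) (A : {pred {mpoly CC[n]}}) :
  is_lie_algebra c -> non_abelian c ->
  lie_subalgebra c L ->
  is_index c 1%:M iq -> is_index c L il ->
  is_subalgebra A ->
  (forall F, F \in A -> l_invariant c L F) ->
  (forall F G, F \in A -> G \in A -> pbr c F G = 0) ->
  forall (k : nat) (f : 'I_k -> {mpoly CC[n]}),
    (forall i, f i \in A) -> alg_indep f ->
    (k%:R : rat) <= (n%:R - iq%:R - (\rank L)%:R + il%:R) / 2 + iq%:R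
    /\ (n%:R - iq%:R - (\rank L)%:R + il%:R) / 2 + iq%:R
       = bnum n iq - bnum (\rank L) il + il%:R.
Proof.
move=> hlie _ _ hq hl _ hinv hpc k f hfA hind.
have [Q [Q0 hQ]] := jacobian hind.
case: hq => [[g1 hg1] _]; case: hl => [[g2 hg2] _].
have [D1 [D10 hD1]] := generic_rank (Gp c) (fun l => g1 l 0).
pose GL := map_mx (@mpolyC n _) L *m Gp c *m (map_mx (@mpolyC n _) L)^T.
have [D2 [D20 hD2]] := generic_rank GL (fun l => g2 l 0).
have [|v hv] := @mpoly_nonroot n (Q * D1 * D2); first by rewrite !mulf_neq0.
rewrite !mevalM !mulf_eq0 !negb_or in hv; case/andP: hv => /andP [hQv hD1v] hD2v.
have GLe w : map_mx (meval w) GL = L *m Bm c w *m L^T.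
  by rewrite /GL !map_mxM map_trmx !map_meval_C.
have hB : (n <= \rank (Bm c v) + iq)%N.
  have := hD1 v hD1v; rewrite -/(Bm c (fun l => g1 l 0)) -gramE.
  have := coad_id c 1%:M g1; rewrite hg1 mul1mx trmx1 mulmx1 mxrank1.
  rewrite -/(Bm c v); lia.
have hLr : (\rank L <= \rank (L *m Bm c v *m L^T) + il)%N.
  have := hD2 v hD2v; rewrite !GLe -gramE.
  have := coad_id c L g2; rewrite hg2 mulmxA; lia.
have rV : \rank (jac f v) = k by apply/eqP; exact: hQ.
have VBV : jac f v *m Bm c v *m (jac f v)^T = 0.
  apply/matrixP => a b; rewrite entry_rows !row_jac -pbr_eval hpc ?meval0 ?mxE //.
have LBV : L *m Bm c v *m (jac f v)^T = 0.
  apply/matrixP => a b; rewrite entry_rows row_jac -[row a L](grad_lin _ v) -pbr_eval.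
  by rewrite (hinv _ (hfA b)) ?meval0 ?mxE // row_sub.
have h := la_bound (Bm_skew v hlie) rV VBV LBV hB hLr.
have h' : ((k.*2 + \rank L)%N%:R : rat) <= (n + iq + il)%N%:R by rewrite ler_nat.
rewrite !natrD -addnn natrD in h'.
rewrite /bnum; split; lra.
Qed.
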